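(* Let $C$ be an $(n,\alpha,v,\rho)$-FR code. Define $g'(\ell)$ for $\ell=1,\dots,v$ recursively by $$g'(1)=\rho,\qquad g'(\ell+1)=g'(\ell)+\rho-\left\lceil\frac{\alpha\,g'(\ell)-\ell\rho}{v-\ell}\right\rceil\quad(\ell=1,\dots,v-1).$$ Then for all $k=1,2,\dots,n$, $$M_k(C)\le\sum_{i=1}^{v}\mathbb I\big(k>n-g'(i)\big),$$ where $\mathbb I(P)$ equals $1$ if $P$ holds and $0$ otherwise.
   Context: An incidence structure is a triple $(\mathcal P,\mathcal B,\mathcal I)$ with $\mathcal P$ (points) and $\mathcal B$ (blocks) finite sets and $\mathcal I\subseteq \mathcal P\times\mathcal B$; repeated blocks are allowed. An $(n,\alpha,v,\rho)$-FR code is an incidence structure with $|\mathcal B|=n$, $|\mathcal P|=v$, every point incident with exactly $\rho$ blocks and every block incident with exactly $\alpha$ points. The supported file size is $M_k(C)=\min_{\mathcal K\subseteq\mathcal B,|\mathcal K|=k}|\{p\in\mathcal P:\exists B\in\mathcal K,(p,B)\in\mathcal I\}|$, the minimum number of distinct points incident with some block of a $k$-set of blocks. *)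

(* Defs.v *)
From mathcomp Require Import all_boot all_order all_algebra.
Set Implicit Arguments. Unset Strict Implicit. Unset Printing Implicit Defensive.
Import Order.TTheory GRing.Theory Num.Theory.

(* An incidence structure with v points ('I_v) and n blocks ('I_n);
   blocks are indexed, so repeated blocks are allowed. *)
Definition is_FR_code (n alpha v rho : nat) (I : 'I_v -> 'I_n -> bool) : Prop :=
  (forall p : 'I_v, #|[set B : 'I_n | I p B]| = rho) /\
  (forall B : 'I_n, #|[set p : 'I_v | I p B]| = alpha).

Definition covered (n v : nat) (I : 'I_v -> 'I_n -> bool) (K : {set 'I_n}) : {set 'I_v} :=
  [set p : 'I_v | [exists B in K, I p B]].

(* M_k(C): minimum over k-sets K of blocks of #covered points
   (the default value v is an upper bound for all terms, so harmless). *)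
Definition Mk (n v : nat) (I : 'I_v -> 'I_n -> bool) (k : nat) : nat :=
  \big[minn/v]_(K : {set 'I_n} | #|K| == k) #|covered I K|.

(* ceiling of a / b for b > 0 (floor division %/ in intdiv is Euclidean) *)
Definition ceilz (a b : int) : int := - ((- a) %/ b)%Z.

(* gp_aux m = g'(m+1) *)
Fixpoint gp_aux (alpha v rho : nat) (m : nat) : int :=
  match m with
  | 0 => (rho%:Z)
  | m'.+1 =>
      let g := gp_aux alpha v rho m' in
      (g + rho%:Z - ceilz (alpha%:Z * g - (m'.+1 * rho)%N%:Z)
                          ((v%:Z - (m'.+1)%:Z)))%R
  end.

Definition gprime (alpha v rho l : nat) : int := gp_aux alpha v rho l.-1.

(* Main.v *)
Require Import Defs.
From mathcomp Require Import all_boot all_order all_algebra.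
From mathcomp Require Import zify ring lra.
Import Order.TTheory GRing.Theory Num.Theory.
Set Implicit Arguments. Unset Strict Implicit.

Lemma pad_set (T : finType) (A : {set T}) j :
  #|A| + j <= #|T| -> exists B : {set T}, A \subset B /\ #|B| = #|A| + j.
Proof.
elim: j A => [|j IH] A H; first by exists A; rewrite addn0.
have: 0 < #|~: A| by rewrite cardsCs setCK; lia.
rewrite card_gt0 => /set0Pn [x Hx].
have Hxa : x \notin A by rewrite -in_setC.
have := IH (x |: A); rewrite cardsU1 Hxa => /(_ ltac:(lia)) [B [sB cB]].
exists B; split; last by lia.
by apply: subset_trans sB; apply: subsetUr.
Qed.

Lemma pad_set' (T : finType) (A : {set T}) k :
  #|A| <= k <= #|T| -> exists B : {set T}, A \subset B /\ #|B| = k.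
Proof.
move=> /andP [h1 h2]; have := @pad_set T A (k - #|A|).
rewrite subnKC // => /(_ h2) //.
Qed.

Lemma double_count n v (I : 'I_v -> 'I_n -> bool) (T : {set 'I_n}) :
  \sum_(p : 'I_v) #|[set B in T | I p B]| =
  \sum_(B in T) #|[set p : 'I_v | I p B]|.
Proof.
transitivity (\sum_(p : 'I_v) \sum_(B in T) (I p B : nat)).
  apply: eq_bigr => p _; rewrite -sum1_card big_mkcond /= [RHS]big_mkcond /=.
  by apply: eq_bigr => B _; rewrite inE; case: (B \in T); case: (I p B).
rewrite exchange_big /=. apply: eq_bigr => B _.
rewrite -sum1_card [RHS]big_mkcond /=; apply: eq_bigr => p _.
by rewrite inE; case: (I p B).
Qed.

Lemma ceil_le (x : int) (d c : int) : (0 < d)%R -> (x <= c * d)%R -> (ceilz x d <= c)%R.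
Proof.
move=> d0 h; rewrite /ceilz lerNl lez_divRL //; lra.
Qed.

Lemma ceil_ge (x : int) (d y : int) : (0 < d)%R -> (y * d <= x)%R -> (y <= ceilz x d)%R.
Proof.
move=> d0 h; rewrite /ceilz lerNr.
have := lez_floor (- x) (lt0r_neq0 d0) => hf.
rewrite -(ler_pM2r d0); apply: le_trans hf _; rewrite mulNr lerN2 //.
Qed.

Lemma bigmin_leq (T : eqType) (r : seq T) (P : pred T) (F : T -> nat) x j :
  j \in r -> P j -> \big[minn/x]_(i <- r | P i) F i <= F j.
Proof.
elim: r => [//|a r IH]; rewrite inE big_cons => /orP [/eqP <- -> | jr Pj].
  exact: geq_minl.
case: (P a); last exact: IH.
by apply: leq_trans (geq_minr _ _) (IH jr Pj).
Qed.

Section Main.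
Variables (n alpha v rho : nat) (I : 'I_v -> 'I_n -> bool).
Hypothesis HC : is_FR_code alpha rho I.

Definition closedST (S : {set 'I_v}) (T : {set 'I_n}) :=
  forall p B, p \in S -> I p B -> B \in T.

Lemma vn : v * rho = n * alpha.
Proof.
have := double_count I setT.
have -> : \sum_(p : 'I_v) #|[set B in [set: 'I_n] | I p B]| = \sum_(p : 'I_v) rho.
  apply: eq_bigr => p _; rewrite -(proj1 HC p); apply: eq_card => B.
  by rewrite !inE.
rewrite (eq_bigr (fun _ => alpha)); last by move=> B _; exact: (proj2 HC).
rewrite !sum_nat_const !cardT !size_enum_ord => ->.
by rewrite cardsT card_ord.
Qed.

Lemma invariant m : m < v -> exists (S : {set 'I_v}) (T : {set 'I_n}), #|S| = m.+1 /\ closedST S T /\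
   (#|T|%:Z = gp_aux alpha v rho m)%R.
Proof.
elim: m => [|m IH] Hm.
  pose p0 : 'I_v := Ordinal Hm.
  exists [set p0], [set B | I p0 B]; split; first by rewrite cards1.
  split; first by move=> p B; rewrite inE => /eqP -> HB; rewrite inE.
  by rewrite /= (proj1 HC).
have [S [T [cS [clS cT]]]] := IH (ltnW Hm).
set g := gp_aux alpha v rho m in cT.
have TcT : #|T| <= n by have := max_card T; rewrite card_ord.
have DC := double_count I T.
rewrite (eq_bigr (fun _ => alpha)) in DC; last by move=> B _; exact: (proj2 HC).
rewrite sum_nat_const (bigID (fun p => p \in S)) /= in DC.
rewrite (eq_bigr (fun _ => rho)) in DC; last first.
  move=> p pS; rewrite -(proj1 HC p); apply: eq_card => B; rewrite !inE.
  by case HB: (I p B); rewrite ?andbT ?andbF // (clS _ _ pS HB).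
rewrite sum_nat_const in DC.
have cSc : #|~: S| = v - m.+1 by rewrite cardsCs setCK card_ord cS.
have [p0 p0S] : exists p0, p0 \in ~: S.
  by apply/set0Pn; rewrite -card_gt0 cSc; lia.
pose c p := #|[set B in T | I p B]|.
case: (@arg_maxnP _ p0 (fun p => p \in ~: S) c p0S) => p pS pmax.
have Hsum : \sum_(q | q \notin S) c q <= #|~: S| * c p.
  rewrite -sum_nat_const; rewrite (eq_bigl (fun q => q \in ~: S)); last by move=> q; rewrite inE.
  by apply: leq_sum => q qS; exact: pmax.
rewrite -/c cS in DC.
pose T' := T :|: [set B | I p B].
have cT' : #|T'| + c p = #|T| + rho.
  have -> : c p = #|T :&: [set B | I p B]| by rewrite /c (_ : [set B in T | I p B] = T :&: [set B | I p B]) //; apply/setP => B; rewrite !inE.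
  by rewrite cardsUI (proj1 HC p).
have clS' : closedST (p |: S) T'.
  move=> q B; rewrite !inE => /orP [/eqP -> | qS] HB.
    by rewrite HB orbT.
  by rewrite (clS _ _ qS HB).
have Hv : v * rho = n * alpha := vn.
have H1 : #|T| * alpha <= c p * (v - m.+1) + m.+1 * rho.
  rewrite -DC -cSc mulnC addnC leq_add2r; rewrite mulnC; exact: Hsum.
have Hvs : v = (v - m.+1) + m.+1 by lia.
move: (v - m.+1) Hvs H1 cSc => d Hvs H1 cSc.
have gle : (#|T'|%:Z <= gp_aux alpha v rho m.+1)%R.
  rewrite /= -/g -cT.
  have : (ceilz (alpha%:Z * #|T|%:Z - (m.+1 * rho)%N%:Z) (v%:Z - m.+1%:Z) <= (c p)%:Z)%R.
    apply: ceil_le; first lia.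
    nia.
  set z := ceilz _ _ => hz; have e : (#|T'|%:Z + (c p)%:Z = #|T|%:Z + rho%:Z)%R by rewrite -!PoszD cT'.
  clearbody z; lra.
have gn : (gp_aux alpha v rho m.+1 <= n%:Z)%R.
  rewrite /= -/g -cT.
  suff : ((#|T|%:Z + rho%:Z - n%:Z) <=
      ceilz (alpha%:Z * #|T|%:Z - (m.+1 * rho)%N%:Z) (v%:Z - m.+1%:Z))%R by lia.
  apply: ceil_ge; first lia.
  case: (leqP alpha (v - m.+1)) => ha.
    have : (alpha - (v - m.+1)) * (n - #|T|) = 0 by rewrite (eqP (_ : alpha - _ == 0)) ?subn_eq0.
    nia.
  have TT : T = setT.
    apply/eqP; rewrite eqEsubset subsetT /=; apply/subsetP => B _.
    apply/negPn/negP => BT.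
    have : [set q | I q B] \subset ~: S.
      apply/subsetP => q; rewrite !inE => HB; apply/negP => qS.
      by rewrite (clS _ _ qS HB) in BT.
    move/subset_leq_card; rewrite (proj2 HC) cSc; lia.
  have -> : #|T| = n by rewrite TT cardsT card_ord.
  nia.
have [T'' [sT'' cT'']] : exists T'' : {set 'I_n}, T' \subset T'' /\ #|T''| = `|gp_aux alpha v rho m.+1|%N.
  apply: pad_set'; rewrite card_ord; apply/andP; split; lia.
exists (p |: S), T''; split.
  by rewrite cardsU1 cS; move: pS; rewrite inE => ->.
split.
  by move=> q B qS HB; apply: (subsetP sT''); exact: (clS' q B qS HB).
rewrite cT''; lia.
Qed.

End Main.

Theorem theorem3 (n alpha v rho : nat) (I : 'I_v -> 'I_n -> bool) :
  is_FR_code alpha rho I ->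
  forall k : nat, (1 <= k <= n)%N ->
  (Mk I k <= \sum_(1 <= i < v.+1)
              nat_of_bool (n%:Z - gprime alpha v rho i < k%:Z)%R)%N.
Proof.
move=> HC k /andP [k1 kn].
have Mkle : forall K : {set 'I_n}, #|K| = k -> Mk I k <= #|covered I K|.
  move=> K cK; rewrite /Mk; apply: bigmin_leq; first by rewrite mem_index_enum.
  by rewrite /= cK.
have key : forall j, j.+1 <= v -> (n%:Z - gp_aux alpha v rho j >= k%:Z)%R -> Mk I k <= v - j.+1.
  move=> j jv hj.
  have [S [T [cS [clS cT]]]] := invariant HC jv.
  have [T2 [sT2 cT2]] : exists T2 : {set 'I_n}, T \subset T2 /\ #|T2| = n - k.
    apply: pad_set'; rewrite card_ord; apply/andP; split; lia.
  have cK : #|~: T2| = k by rewrite cardsCs setCK card_ord cT2; lia.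
  apply: leq_trans (Mkle _ cK) _.
  have : covered I (~: T2) \subset ~: S.
    apply/subsetP => q; rewrite !inE => /existsP [B /andP [BT HB]]; apply/negP => qS.
    by move: BT; rewrite inE (subsetP sT2 _ (clS _ _ qS HB)).
  move/subset_leq_card => h; apply: leq_trans h _; by rewrite cardsCs setCK card_ord cS.
suff : forall j, j <= v -> Mk I k <= \sum_(1 <= i < j.+1)
        nat_of_bool (n%:Z - gprime alpha v rho i < k%:Z)%R + (v - j).
  by move/(_ v (leqnn v)); rewrite subnn addn0.
elim => [|j IH] jv.
  rewrite big_geq // add0n subn0.
  have [K [_ cK]] := @pad_set' 'I_n set0 k ltac:(rewrite cards0 card_ord; lia).
  apply: leq_trans (Mkle _ cK) _.
  by have := max_card (covered I K); rewrite card_ord.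
have e : gprime alpha v rho j.+1 = gp_aux alpha v rho j by [].
rewrite big_nat_recr // e /=.
case: ltP => h /=.
  have := IH (ltnW jv); lia.
have := key j jv h; lia.
Qed.
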